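(* For every $a\in k\setminus\{0,1\}$ one has $\partial(\langle a\rangle)=2\,\epsilon(a)$ in $k\otimes_{\mathbb Z}k^\times$, where $\epsilon(a):=a\otimes a+(1-a)\otimes(1-a)$.
   Context: Let $k$ be an algebraically closed field of characteristic $\neq 2$, $R$ the local ring of ${\mathbb A}^1_k=\mathrm{Spec}\,k[t]$ at $t=0$, $\mathfrak m=tR$. For $(a,b)\in (R\times\mathfrak m^2)\cup(\mathfrak m^2\times R)$, $\langle a,b\rangle\in K_2(R,\mathfrak m^2)$ is the Dennis–Stein (pointy bracket) symbol, corresponding to the Milnor symbol $\{1-ab,b\}$ when $b\neq0$. $\mathcal C$ is the subgroup generated by the $\langle a,b\rangle$ with $a\in\mathfrak m^2$, $b\in k$, and $TB_2(k):=K_2(R,\mathfrak m^2)/\mathcal C$. For $v\in k^\times$, $\mathrm{tame}_v:K_2(R,\mathfrak m^2)\to k^\times$ is the tame symbol at $t=v$, and $\partial:TB_2(k)\to k\otimes_{\mathbb Z}k^\times$ is induced by $x\mapsto\sum_{v\in k^\times}v^{-1}\otimes\mathrm{tame}_v(x)$. For $a\in k\setminus\{0,1\}$, $\langle a\rangle:=\big\langle t^2,\tfrac{a(1-a)}{t-1}\big\rangle\in TB_2(k)$. *)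

(* Defs.v *)
From HB Require Import structures.
From mathcomp Require Import all_boot all_order all_algebra.
Set Implicit Arguments. Unset Strict Implicit. Unset Printing Implicit Defensive.
Import Order.TTheory GRing.Theory Num.Theory.
Local Open Scope ring_scope.

(* k(t) is modelled as {fraction {poly k}}; t = 'X. *)

Section TB2.
Variable k : fieldType.

Definition ratfun := {fraction {poly k}}.

Definition tvar : ratfun := FracField.tofrac ('X : {poly k}).
Definition cst (c : k) : ratfun := FracField.tofrac (c%:P).

Definition rnum (f : ratfun) : {poly k} := \n_(repr f).
Definition rden (f : ratfun) : {poly k} := \d_(repr f).

Definition ordv (v : k) (f : ratfun) : int :=
  (mup v (rnum f))%:Z - (mup v (rden f))%:Z.

Definition unitval (v : k) (f : ratfun) : k :=
  (rnum f %/ ('X - v%:P) ^+ mup v (rnum f)).[v] /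
  (rden f %/ ('X - v%:P) ^+ mup v (rden f)).[v].

Definition tame (v : k) (f g : ratfun) : k :=
  (-1) ^ (ordv v f * ordv v g) *
  (unitval v g ^ (ordv v f) / unitval v f ^ (ordv v g)).

(* Dennis--Stein symbol <A, B> = Milnor symbol {1 - A B, B} *)
Definition DS (A B : ratfun) : ratfun * ratfun := (1 - A * B, B).

Definition bracket_a (a : k) : ratfun * ratfun :=
  DS (tvar ^+ 2) (cst (a * (1 - a)) / (tvar - 1)).

(* Bilinear maps k x k^x -> G (additive in the first variable,
   multiplicative-to-additive in the second): these are exactly the group
   homomorphisms out of k (x)_Z k^x. *)
Definition bilin (G : zmodType) (phi : k -> k -> G) : Prop :=
  (forall x y u, u != 0 -> phi (x + y) u = phi x u + phi y u) /\
  (forall x u w, u != 0 -> w != 0 -> phi x (u * w) = phi x u + phi x w).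

(* Equality in k (x)_Z k^x of two formal sums  sum x_i (x) u_i  (u_i <> 0),
   tested against every homomorphism out of the tensor product. *)
Definition tensor_eq (s1 s2 : seq (k * k)) : Prop :=
  forall (G : zmodType) (phi : k -> k -> G), bilin phi ->
    \sum_(p <- s1) phi p.1 p.2 = \sum_(p <- s2) phi p.1 p.2.

Definition epsilon (a : k) : seq (k * k) := [:: (a, a); (1 - a, 1 - a)].

(* boundary:  d(x) = sum_{v in k^x} v^{-1} (x) tame_v(x)  equals target;
   the sum is finitely supported: S is a finite set of nonzero points outside
   of which tame_v(x) = 1 (so the term v^{-1} (x) 1 vanishes). *)
Definition boundary_eq (x : ratfun * ratfun) (target : seq (k * k)) : Prop :=
  exists S : seq k,
    [/\ uniq S, (forall v, v \in S -> v != 0),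
        (forall v, v != 0 -> v \notin S -> tame v x.1 x.2 = 1) &
        tensor_eq [seq (v^-1, tame v x.1 x.2) | v <- S] target].

End TB2.

(* Main.v *)
Require Import Defs.
From HB Require Import structures.
From mathcomp Require Import all_boot all_order all_algebra.
From mathcomp Require Import zify ring.
Import Order.TTheory GRing.Theory Num.Theory.
Local Open Scope ring_scope.
Local Open Scope quotient_scope.
Set Implicit Arguments. Unset Strict Implicit.

Lemma frac_repr (R : idomainType) (f : {fraction R}) :
  FracField.tofrac (\n_(repr f)) = f * FracField.tofrac (\d_(repr f)).
Proof.
set x := repr f.
have -> : f = \pi_(FracField.type R) x by rewrite /x reprK.
unlock FracField.tofrac.
rewrite -[_ * _]FracField.pi_mul; apply/eqmodP.
rewrite /= FracField.equivfE /FracField.mulf /= !numden_Ratio ?mulf_neq0 ?oner_neq0 ?denom_ratioP //.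
by rewrite mulr1 mul1r mulrC.
Qed.

Definition uv (k : fieldType) (v : k) (p : {poly k}) :=
  (p %/ ('X - v%:P) ^+ mup v p).[v].

Lemma fact_mup (k : fieldType) (v : k) (p : {poly k}) : p != 0 ->
  p = ('X - v%:P) ^+ mup v p * (p %/ ('X - v%:P) ^+ mup v p) /\
  ~~ root (p %/ ('X - v%:P) ^+ mup v p) v.
Proof.
move=> p0.
have hd : ('X - v%:P) ^+ mup v p %| p by rewrite -mup_geq.
split; first by rewrite mulrC divpK.
set m := mup v p in hd *; set q := p %/ _.
have Ep : p = q * ('X - v%:P) ^+ m by rewrite /q divpK.
apply/negP; rewrite -dvdp_XsubCl => hr.
have : ('X - v%:P) ^+ m.+1 %| p.
  by rewrite Ep exprS dvdp_mul // dvdpp.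
by rewrite -mup_geq // ltnn.
Qed.

Lemma dec_mup (k : fieldType) (v : k) (p q : {poly k}) (m : nat) :
  ~~ root q v -> p = ('X - v%:P) ^+ m * q -> mup v p = m /\ uv v p = q.[v].
Proof.
move=> hq ->.
have hm : mup v (('X - v%:P) ^+ m * q) = m by rewrite mupMl // mup_XsubCX eqxx.
split => //; by rewrite /uv hm mulrC mulpK // expf_neq0 // polyXsubC_eq0.
Qed.

Lemma uv_neq0 (k : fieldType) (v : k) (p : {poly k}) : p != 0 -> uv v p != 0.
Proof. by move=> /(fact_mup v) [_]. Qed.

Lemma mupuvM (k : fieldType) (v : k) (p q : {poly k}) : p != 0 -> q != 0 ->
  mup v (p * q) = (mup v p + mup v q)%N /\ uv v (p * q) = uv v p * uv v q.
Proof.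
move=> p0 q0; have [Ep rp] := fact_mup v p0; have [Eq rq] := fact_mup v q0.
have := (@dec_mup k v (p * q) ((p %/ ('X - v%:P) ^+ mup v p) * (q %/ ('X - v%:P) ^+ mup v q)) (mup v p + mup v q)).
rewrite rootM negb_or rp rq => /(_ isT) [].
  by rewrite {1}Ep {1}Eq exprD; ring.
by move=> -> ->; rewrite hornerM.
Qed.

Lemma ordv_rep (k : fieldType) (v : k) (f : ratfun k) (n d : {poly k}) :
  n != 0 -> d != 0 -> FracField.tofrac n = f * FracField.tofrac d ->
  ordv v f = (mup v n)%:Z - (mup v d)%:Z /\ unitval v f = uv v n / uv v d.
Proof.
move=> n0 d0 E.
have D0 : rden f != 0 := denom_ratioP _.
have EN := frac_repr f.
have ENd : rnum f * d = n * rden f.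
  apply/eqP; rewrite -tofrac_eq !tofracM.
  rewrite /rnum /rden EN E; apply/eqP; ring.
have N0 : rnum f != 0.
  by apply: contraTneq (mulf_neq0 n0 D0) => h; rewrite -ENd h mul0r eqxx.
have [m1 u1] := mupuvM v N0 d0.
have [m2 u2] := mupuvM v n0 D0.
split.
  have : (mup v (rnum f) + mup v d)%N = (mup v n + mup v (rden f))%N
    by rewrite -m1 -m2 ENd.
  rewrite /ordv; lia.
have : uv v (rnum f) * uv v d = uv v n * uv v (rden f) by rewrite -u1 -u2 ENd.
move=> h; apply/eqP; rewrite /unitval -/(uv v (rnum f)) -/(uv v (rden f)).
by rewrite eqr_div ?uv_neq0 // h.
Qed.

Lemma mupX (k : fieldType) (v w : k) :
  mup v ('X - w%:P) = (w == v) :> nat /\ uv v ('X - w%:P) = if w == v then 1 else v - w.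
Proof.
have [->|ne] := eqVneq w v.
  have [-> ->] : mup v ('X - v%:P) = 1%N /\ uv v ('X - v%:P) = (1 : {poly k}).[v].
    by apply: dec_mup; rewrite ?root1 ?expr1 ?mulr1.
  by rewrite hornerC.
have [-> ->] : mup v ('X - w%:P) = 0%N /\ uv v ('X - w%:P) = ('X - w%:P).[v].
  by apply: dec_mup; rewrite ?expr0 ?mul1r // /root !hornerE subr_eq0 eq_sym.
by rewrite !hornerE.
Qed.

Lemma mupC (k : fieldType) (v c : k) : c != 0 ->
  mup v c%:P = 0%N /\ uv v c%:P = c.
Proof.
move=> c0.
have [-> ->] : mup v c%:P = 0%N /\ uv v c%:P = (c%:P).[v].
  by apply: dec_mup; rewrite ?expr0 ?mul1r // /root hornerC.
by rewrite hornerC.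
Qed.

Lemma cstM (k : fieldType) (x y : k) : cst (x * y) = cst x * cst y.
Proof. by rewrite /cst polyCM tofracM. Qed.
Lemma cstD (k : fieldType) (x y : k) : cst (x + y) = cst x + cst y.
Proof. by rewrite /cst polyCD tofracD. Qed.
Lemma cstN (k : fieldType) (x : k) : cst (- x) = - cst x.
Proof. by rewrite /cst polyCN tofracN. Qed.
Lemma cst1 (k : fieldType) : cst (1 : k) = 1.
Proof. by rewrite /cst polyC1 tofrac1. Qed.

Lemma key (k : fieldType) (a : k) (ha0 : a != 0) (ha1 : a != 1) (v : k) :
  tame v (bracket_a a).1 (bracket_a a).2 =
  if 1 == v then 1 else if a^-1 == v then (if (1-a)^-1 == v then a^+4 else a^+2)
  else if (1-a)^-1 == v then (1-a)^+2 else 1.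
Proof.
set al := a^-1; set be := (1-a)^-1; set c := a * (1 - a).
have ha1' : 1 - a != 0 by rewrite subr_eq0 eq_sym.
have c0 : c != 0 by rewrite mulf_neq0.
set nf := (-c)%:P * (('X - al%:P) * ('X - be%:P)).
set df := 'X - (1 : k)%:P.
have nf0 : nf != 0 by rewrite !mulf_neq0 ?polyXsubC_eq0 // polyC_eq0 oppr_eq0.
have df0 : df != 0 by rewrite polyXsubC_eq0.
have c'0 : c%:P != 0 by rewrite polyC_eq0.
have Edf : FracField.tofrac df = tvar k - 1 by rewrite /df tofracB polyC1 tofrac1.
have T10 : tvar k - 1 != 0 by rewrite -Edf tofrac_eq0.
rewrite /bracket_a /DS /=.
have h1 : cst c * (cst al + cst be) = 1.
  rewrite -cstD -cstM -cst1; congr cst; rewrite /c /al /be; field.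
  by rewrite ha1' ha0.
have h2 : cst c * cst al * cst be = 1.
  rewrite -!cstM -cst1; congr cst; rewrite /c /al /be; field.
  by rewrite ha1' ha0.
have Enf : FracField.tofrac nf = (1 - tvar k ^+ 2 * (cst c / (tvar k - 1))) * FracField.tofrac df.
  rewrite Edf.
  have -> : (1 - tvar k ^+ 2 * (cst c / (tvar k - 1))) * (tvar k - 1) = tvar k - 1 - tvar k ^+ 2 * cst c.
    by rewrite mulrBl mul1r -mulrA divfK.
  rewrite /nf !tofracM !tofracB -/(cst (-c)) -/(tvar k) -/(cst al) -/(cst be) cstN.
  transitivity (- cst c * tvar k ^+ 2 + (cst c * (cst al + cst be)) * tvar k - cst c * cst al * cst be); first by ring.
  by rewrite h1 h2; ring.
have Eng : FracField.tofrac c%:P = (cst c / (tvar k - 1)) * FracField.tofrac df.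
  by rewrite Edf divfK.
have [Of Uf] := @ordv_rep k v _ nf df nf0 df0 Enf.
have [Og Ug] := @ordv_rep k v _ c%:P df c'0 df0 Eng.
rewrite /tame Of Uf Og Ug.
have [mC uC] := mupC v c0.
have [mD uD] := mupX v 1.
have [mA uA] := mupX v al.
have [mB uB] := mupX v be.
have xa0 : 'X - al%:P != 0 by rewrite polyXsubC_eq0.
have xb0 : 'X - be%:P != 0 by rewrite polyXsubC_eq0.
have cn0 : (-c)%:P != 0 by rewrite polyC_eq0 oppr_eq0.
have [mAB uAB] := mupuvM v xa0 xb0.
have [mN uN] := mupuvM v cn0 (mulf_neq0 xa0 xb0).
have cn0' : -c != 0 by rewrite oppr_eq0.
have [mC' uC'] := mupC v cn0'.
have al1 : (al == 1) = false by rewrite /al invr_eq1 (negbTE ha1).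
have be1 : (be == 1) = false.
  by rewrite /be invr_eq1 subr_eq addrC -subr_eq subrr eq_sym (negbTE ha0).
have hA : c / (al - 1) = a ^+ 2.
 by rewrite /c /al; field; rewrite ?mulN1r ?ha0 ?ha1'.
have hB : c / (be - 1) = (1 - a) ^+ 2.
 rewrite /c /be; field; by rewrite ha1' mulN1r opprB addrC subrK ha0.
rewrite /nf mN uN mAB uAB mC' uC' mA mB uA uB mC uC /df mD uD.
have simp := (add0n, addn0, subr0, sub0r, mulr0, mulrNN, mulr1, expr0z, expr1z, exprN1, divr1, mul1r, invr1).
case: (eqVneq 1 v) => [<-|n1].
  rewrite ?al1 ?be1 ?eqxx /= !simp /al /be /c. field.
  apply/and5P; split => //.
  - rewrite addrAC subrr sub0r. by apply/negP => /eqP h; move/eqP: ha0; apply; rewrite -[a]opprK h oppr0.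
  - by rewrite subr_eq0.
rewrite ?(negbTE n1) /=.
case: (eqVneq al v) => [<-|nA]; case: (eqVneq be al) => [eAB|nAB].
- rewrite ?eAB ?eqxx /= !simp hA -exprnP -exprM. done.
- rewrite ?eqxx 1?eq_sym ?(negbTE nAB) /= !simp hA. done.
- rewrite ?eAB ?(negbTE nA) /= !simp. done.
- rewrite ?(negbTE nA) /=. case: (eqVneq be v) => [<-|nB] /=; rewrite !simp ?hB //.
Qed.

Lemma phipow (k : fieldType) (G : zmodType) (phi : k -> k -> G) (x u : k) (n : nat) :
  bilin phi -> u != 0 -> phi x (u ^+ n) = phi x u *+ n.
Proof.
move=> [_ hmul] u0; elim: n => [|n IH].
  rewrite expr0 mulr0n; apply/(addrI (phi x 1)).
  by rewrite -hmul ?oner_neq0 // mulr1 addr0.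
by rewrite exprS hmul ?expf_neq0 // IH mulrS.
Qed.

Unset Implicit Arguments.

Theorem lemma3p1 (k : closedFieldType) (hchar : (2%:R : k) != 0)
  (a : k) (ha0 : a != 0) (ha1 : a != 1) :
  boundary_eq (bracket_a a) (epsilon a ++ epsilon a).
Proof.
have ha1' : 1 - a != 0 by rewrite subr_eq0 eq_sym.
have al1 : (1 == a^-1) = false by rewrite eq_sym invr_eq1 (negbTE ha1).
have be1 : (1 == (1 - a)^-1) = false.
  by rewrite eq_sym invr_eq1 subr_eq addrC -subr_eq subrr eq_sym (negbTE ha0).
exists (if a^-1 == (1 - a)^-1 then [:: a^-1] else [:: a^-1; (1 - a)^-1]).
split.
- by case: ifP => //= /negbT ne; rewrite inE ne.
- move=> v; case: ifP => _; rewrite !inE; first by move=> /eqP ->; rewrite invr_eq0.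
  by case/orP => /eqP ->; rewrite invr_eq0.
- move=> v v0 vS; rewrite key //; case: ifP => // _.
  move: vS; case: ifP => [/eqP <-|_]; rewrite !inE.
    by rewrite eq_sym => /negbTE ->.
  by rewrite negb_or !(eq_sym v) => /andP [/negbTE -> /negbTE ->].
- move=> G phi hphi; have [hadd hmul] := hphi.
  rewrite big_cat /= !big_cons !big_nil !addr0.
  case: ifP => [/eqP e|/negbT ne].
    have e' : 1 - a = a by rewrite -[1 - a]invrK -e invrK.
    rewrite big_cons big_nil addr0 key // al1 eqxx e eqxx invrK /=.
    rewrite e' phipow // !mulrS mulr0n addr0 !addrA //.
  rewrite !big_cons big_nil addr0 !key // al1 be1 !eqxx (negbTE ne) eq_sym (negbTE ne) /=.
  by rewrite !invrK !phipow // !mulr2n addrACA.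
Qed.
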